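(* Let $\mathbb{K}$ be a field and let $\mathcal F=\{f_n(q)\}_{n=1}^\infty$ be a sequence of polynomials in $\mathbb{K}[q]$ satisfying $f_{mn}(q)=f_m(q)f_n(q^m)$ for all $m,n\in\mathbb N$. Suppose $\mathrm{supp}(\mathcal F)=S(P)$ for some nonempty finite set $P$ of prime numbers, and $f_p(0)=1$ for all $p\in P$. Then there exists a formal power series $F(q)\in\mathbb{K}[[q]]$ such that \[ F(q)=\lim_{\substack{n\to\infty\\ n\in S(P)}}f_n(q), \] i.e. for every $N$ there is $n_0$ such that $f_n(q)\equiv F(q)\pmod{q^N}$ for all $n\in S(P)$ with $n\ge n_0$.
   Context: $\mathbb N=\{1,2,3,\dots\}$. $\mathrm{supp}(\mathcal F)=\{n\in\mathbb N: f_n(q)\ne0\}$. For a set $P$ of primes, $S(P)$ is the multiplicative semigroup of positive integers generated by $P$ (all finite products of elements of $P$, including the empty product $1$). For power series $g,h$, $g\equiv h\pmod{q^N}$ means their coefficients of $q^0,\dots,q^{N-1}$ agree. *)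

(* Defs.v *)
From mathcomp Require Import all_boot all_order all_algebra.
Set Implicit Arguments. Unset Strict Implicit. Unset Printing Implicit Defensive.
Import GRing.Theory.
Local Open Scope ring_scope.

(* S(P): the multiplicative semigroup generated by the primes in P
   (finite products of elements of P, including the empty product 1). *)
Definition inS (P : seq nat) (n : nat) : Prop :=
  exists s : seq nat, all (fun p => p \in P) s /\ n = (\prod_(p <- s) p)%N.

Definition fps (K : fieldType) := nat -> K.

Definition congr_mod_qN (K : fieldType) (g : {poly K}) (F : fps K) (N : nat) : Prop :=
  forall i, (i < N)%N -> g`_i = F i.

(* Main.v *)
Require Import Defs.
From mathcomp Require Import all_boot all_order all_algebra.
From mathcomp Require Import zify.
Import GRing.Theory.
Local Open Scope ring_scope.

Lemma inS_pos (P : seq nat) n : all prime P -> inS P n -> (0 < n)%N.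
Proof.
move=> hP [s [hs ->]]; elim: s hs => [|p s IH] /=; first by rewrite big_nil.
case/andP=> hp hs; rewrite big_cons muln_gt0 IH // andbT.
by apply: prime_gt0; apply: (allP hP).
Qed.

Arguments inS_pos {P n}.

Lemma inS_mul (P : seq nat) m n : inS P m -> inS P n -> inS P (m * n).
Proof.
move=> [s [hs ->]] [t [ht ->]]; exists (s ++ t).
by rewrite all_cat hs ht big_cat.
Qed.

Lemma inS1 (P : seq nat) : inS P 1.
Proof. by exists [::]; rewrite big_nil. Qed.

Theorem mainTheorem4 (K : fieldType) (f : nat -> {poly K}) (P : seq nat) :
  (forall m n, (0 < m)%N -> (0 < n)%N -> f (m * n)%N = f m * (f n \Po 'X^m)) ->
  (forall n, (0 < n)%N -> (f n != 0 <-> inS P n)) ->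
  P != [::] -> all prime P ->
  (forall p, p \in P -> (f p).[0] = 1) ->
  exists F : fps K, forall N : nat, exists n0 : nat,
    forall n, (0 < n)%N -> inS P n -> (n0 <= n)%N -> congr_mod_qN (f n) F N.
Proof.
move=> hmul hsupp hPne hPpr hP0.
have f1 : f 1%N = 1.
  have h := hmul 1%N 1%N isT isT.
  rewrite muln1 comp_polyXr in h.
  have nz : f 1%N != 0 by apply/(hsupp 1%N isT); apply: inS1.
  by apply: (mulfI nz); rewrite mulr1 -h.
have c0 : forall n, inS P n -> (f n)`_0 = 1.
  move=> n [s [hs ->]]; elim: s hs => [|p s IH] /=.
    by rewrite big_nil f1 coefC.
  case/andP=> hp hs; rewrite big_cons.
  have pp : (0 < p)%N by apply: prime_gt0; apply: (allP hPpr).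
  have sp : (0 < \prod_(j <- s) j)%N.
    by apply: (@inS_pos P _ hPpr); exists s; split.
  rewrite hmul // coefMr big_ord_recr /= subnn coef_comp_poly_Xn // dvdn0 div0n.
  rewrite IH // big_ord0 add0r -horner_coef0 hP0 //.
  by rewrite mul1r.
have key : forall M m k, inS P m -> inS P k -> (M <= m)%N -> (M <= k)%N ->
    forall i, (i < M)%N -> (f m)`_i = (f k)`_i.
  have half : forall M m k, inS P m -> inS P k -> (M <= k)%N ->
      forall i, (i < M)%N -> (f (k * m)%N)`_i = (f k)`_i.
    move=> M m k hm hk hMk i hi.
    have mp := inS_pos hPpr hm; have kp := inS_pos hPpr hk.
    rewrite hmul // coefMr big_ord_recl subn0 coef_comp_poly_Xn // dvdn0 div0n.
    rewrite c0 // mulr1 big1 ?addr0 // => j _.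
    rewrite coef_comp_poly_Xn //.
    have -> : (k %| bump 0 j)%N = false.
      apply/negbTE; apply: contraTN isT => hd.
      have hj := ltn_ord j.
      have hle := dvdn_leq (ltn0Sn j) hd.
      rewrite /bump /= in hle.
      have : (k < k)%N.
        move: hle hj hi hMk; rewrite -/(nat_of_ord j); clear; lia.
      by rewrite ltnn.
    by rewrite mulr0.
  move=> M m k hm hk hMm hMk i hi.
  by rewrite -(half M k m hk hm hMm i hi) mulnC (half M m k hm hk hMk i hi).
clear c0 f1.
case: P hPne hPpr hP0 hsupp key => [//|p0 P'] _ hPpr hP0 hsupp key.
have hp0 : p0 \in p0 :: P' by rewrite mem_head.
have p0pr : prime p0 by apply: (allP hPpr).
have hpow : forall k, inS (p0 :: P') (p0 ^ k).
  elim=> [|k IH]; first by apply: inS1.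
  rewrite expnS; apply: inS_mul IH; exists [:: p0]; split.
    by rewrite /= hp0.
  by rewrite big_seq1.
exists (fun i => (f (p0 ^ i.+1)%N)`_i) => N; exists N => n _ hn hN i hi.
apply: (key i.+1) => //.
  by apply: leq_trans hi hN.
by apply: ltnW; apply: ltn_expl; apply: prime_gt1.
Qed.
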